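(* Let $G$ be a finite group and $x\in G$. If $C_G(x)$ is a maximal centralizer in $G$, then $\beta_G(x)\cup Z(G)$ is a subgroup of $G$.
   Context: For a finite group $G$, $C_G(x)$ denotes the centralizer of $x\in G$ and $Z(G)$ the center. $\beta_G(x)=\{y\in G\mid C_G(y)=C_G(x)\}$. A centralizer $C_G(x)$ is called maximal if it is not contained in any other proper centralizer of $G$ (i.e. there is no $y\in G$ with $C_G(x)\subsetneq C_G(y)\neq G$). *)

(* Defs.v *)
From mathcomp Require Import all_boot all_fingroup all_solvable.
Set Implicit Arguments. Unset Strict Implicit. Unset Printing Implicit Defensive.
Local Open Scope group_scope.

Definition beta (gT : finGroupType) (G : {set gT}) (x : gT) : {set gT} :=
  [set y in G | 'C_G[y] == 'C_G[x]].

Definition maximal_centralizer (gT : finGroupType) (G : {set gT}) (x : gT) : Prop :=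
  ~ (exists2 y, y \in G & ('C_G[x] \proper 'C_G[y]) && ('C_G[y] != G)).

(* Main.v *)
Require Import Defs.
From mathcomp Require Import all_boot all_fingroup all_solvable.
Local Open Scope group_scope.

Theorem proposition3p2 (gT : finGroupType) (G : {group gT}) (x : gT) :
  x \in G -> maximal_centralizer G x -> group_set (beta G x :|: 'Z(G)).
Proof.
move=> xG maxC.
have subS : forall s, s \in beta G x :|: 'Z(G) -> (s \in G) /\ ('C_G[x] \subset 'C_G[s]).
  move=> s; rewrite in_setU inE => /orP [/andP [sG /eqP ->]| /centerP [sG cs]].
    by split.
  split=> //; apply/subsetP=> z /setIP [zG _]; apply/setIP; split=> //.
  by apply/cent1P; apply/commute_sym; apply: cs.
apply/group_setP; split.
  by rewrite in_setU group1 orbT.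
move=> a b /subS [aG Ca] /subS [bG Cb].
have abG : a * b \in G by rewrite groupM.
have Cab : 'C_G[x] \subset 'C_G[a * b].
  apply/subsetP=> z zC.
  move: (subsetP Ca z zC) (subsetP Cb z zC) => /setIP [zG /cent1P za] /setIP [_ /cent1P zb].
  apply/setIP; split=> //; apply/cent1P.
  by apply: commuteM.
case: (eqVneq 'C_G[a * b] 'C_G[x]) => [E|NE].
  by rewrite in_setU inE abG E eqxx.
have pr : 'C_G[x] \proper 'C_G[a * b].
  by rewrite properEneq Cab andbT eq_sym.
case: (eqVneq 'C_G[a * b] G) => [EG|NG]; last first.
  by exfalso; apply: maxC; exists (a * b) => //; rewrite pr NG.
rewrite in_setU; apply/orP; right; apply/centerP; split=> // z zG.
have : z \in 'C_G[a * b] by rewrite EG.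
by move=> /setIP [_ /cent1P]; apply: commute_sym.
Qed.
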